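(* Let $G$ be a connected vertex-transitive graph with at least one edge. Then $\mathrm{ldim}_f(G)=\frac{|V(G)|}{l(G)}$, where $l(G)=\min\{|L(uv)|: uv\in E(G)\}$.
   Context: All graphs are finite and simple; $d$ is the shortest-path distance. $G$ is vertex-transitive if its automorphism group acts transitively on $V(G)$. For an edge $uv$, $L(uv)=\{x\in V(G): d(u,x)\neq d(v,x)\}$. A function $f:V(G)\to[0,1]$ is a local resolving function if $\sum_{x\in L(uv)}f(x)\geq 1$ for every edge $uv$; $\mathrm{ldim}_f(G)$ is the minimum of $\sum_v f(v)$ over all local resolving functions. *)

(* Defs.v *)
From HB Require Import structures.
From mathcomp Require Import all_boot all_order all_algebra all_fingroup.
Set Implicit Arguments. Unset Strict Implicit. Unset Printing Implicit Defensive.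
Import Order.TTheory GRing.Theory Num.Theory.

(* A simple graph is a symmetric irreflexive relation e on a finType T. *)

Definition reach (T : finType) (e : rel T) (u v : T) (n : nat) : bool :=
  [exists p : n.-tuple T, path e u p && (last u p == v)].

(* Shortest-path distance: least n with a walk of length n from u to v.
   (Searched among 0 .. #|T|-1, which suffices in a connected graph;
   unreachable vertices get distance #|T|.) *)
Definition dist (T : finType) (e : rel T) (u v : T) : nat :=
  find (reach e u v) (iota 0 #|T|).

Definition Lset (T : finType) (e : rel T) (u v : T) : {set T} :=
  [set x | dist e u x != dist e v x].

(* l(G) = min { |L(uv)| : uv in E(G) } (the default #|T| is an upper bound
   of every |L(uv)|, so it does not affect the min when E(G) is nonempty). *)
Definition lG (T : finType) (e : rel T) : nat :=
  \big[minn/#|T|]_(p : T * T | e p.1 p.2) #|Lset e p.1 p.2|.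

Definition connected_graph (T : finType) (e : rel T) : Prop :=
  forall u v : T, connect e u v.

Definition vertex_transitive (T : finType) (e : rel T) : Prop :=
  forall u v : T, exists g : {perm T},
    (forall x y, e (g x) (g y) = e x y) /\ g u = v.

Definition local_resolving (R : realFieldType) (T : finType) (e : rel T)
    (f : T -> R) : Prop :=
  (forall x, 0 <= f x <= 1)%R /\
  (forall u v, e u v -> (1 <= \sum_(x in Lset e u v) f x)%R).

Definition is_ldimf (R : realFieldType) (T : finType) (e : rel T) (m : R) : Prop :=
  (exists f : T -> R, local_resolving e f /\ (\sum_x f x)%R = m) /\
  (forall f : T -> R, local_resolving e f -> (m <= \sum_x f x)%R).

(* Main.v *)
Require Import Defs.
From HB Require Import structures.
From mathcomp Require Import all_boot all_order all_algebra all_fingroup.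
Import Order.TTheory GRing.Theory Num.Theory.
Set Implicit Arguments. Unset Strict Implicit.

Section Aux.
Variables (T : finType) (e : rel T).

Definition isAut (g : {perm T}) : bool := [forall x, forall y, e (g x) (g y) == e x y].

Lemma isAutP (g : {perm T}) : reflect (forall x y, e (g x) (g y) = e x y) (isAut g).
Proof.
apply: (iffP forallP) => [H x y | H x]; last by apply/forallP => y; rewrite H.
by move/forallP: (H x) => /(_ y) /eqP.
Qed.

Lemma isAutV (g : {perm T}) : isAut g -> isAut g^-1.
Proof.
move/isAutP=> H; apply/isAutP => x y.
by rewrite -H !permKV.
Qed.

Lemma isAutM (g h : {perm T}) : isAut h -> isAut (h * g)%g = isAut g.
Proof.
move=> Hh; apply/isAutP/isAutP => H x y.
- have Hv := isAutP _ (isAutV Hh).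
  have := H (h^-1 x)%g (h^-1 y)%g; rewrite !permM !permKV => ->; exact: Hv.
- by rewrite !permM H (isAutP _ Hh).
Qed.

Lemma path_map g (Hg : forall x y, e (g x) (g y) = e x y) x p :
  path e x p -> path e (g x) (map g p).
Proof. by elim: p x => //= y p IH x /andP[a b]; rewrite Hg a IH. Qed.

Lemma reach_aut1 (g : {perm T}) u v n : isAut g -> reach e u v n -> reach e (g u) (g v) n.
Proof.
move=> /isAutP Hg /existsP[p /andP[pp /eqP lp]]; apply/existsP.
exists (map_tuple g p) => /=.
by rewrite path_map // last_map lp eqxx.
Qed.

Lemma reach_aut (g : {perm T}) u v n : isAut g -> reach e (g u) (g v) n = reach e u v n.
Proof.
move=> Hg; apply/idP/idP; last exact: reach_aut1.
by move/(reach_aut1 (isAutV Hg)); rewrite !permK.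
Qed.

Lemma dist_aut (g : {perm T}) u v : isAut g -> dist e (g u) (g v) = dist e u v.
Proof. by move=> Hg; rewrite /dist; apply: eq_find => n; exact: reach_aut. Qed.

Lemma Lset_aut (g : {perm T}) u v x : isAut g -> (g x \in Lset e (g u) (g v)) = (x \in Lset e u v).
Proof. by move=> Hg; rewrite !inE !dist_aut. Qed.

Lemma dist_refl u : dist e u u = 0.
Proof.
rewrite /dist; have : 0 < #|T| by apply/card_gt0P; exists u.
case: #|T| => // n _ /=.
suff -> : reach e u u 0 by [].
by apply/existsP; exists [tuple] => /=.
Qed.

Lemma dist_neq u v : u != v -> dist e v u != 0.
Proof.
move=> uv; rewrite /dist; have : 0 < #|T| by apply/card_gt0P; exists u.
case: #|T| => // n _ /=.
suff -> : reach e v u 0 = false by [].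
apply/negbTE/negP => /existsP[p /andP[_ /eqP]].
rewrite tuple0 /= => vu; by rewrite vu eqxx in uv.
Qed.

End Aux.

Lemma bigmin_le_n (I : eqType) (r : seq I) (P : pred I) F x0 j :
  j \in r -> P j -> \big[minn/x0]_(i <- r | P i) F i <= F j.
Proof.
elim: r => // i r IH; rewrite inE big_cons => /orP[/eqP <- ->|jr Pj].
  exact: geq_minl.
case: (P i); last exact: IH.
by rewrite geq_min IH ?orbT.
Qed.


Theorem theorem2p15 (R : realFieldType) (T : finType) (e : rel T)
    (e_sym : symmetric e) (e_irr : irreflexive e)
    (conn : connected_graph e) (vt : vertex_transitive e)
    (has_edge : exists u v, e u v) :
  @is_ldimf R T e ((#|T|)%:R / (lG e)%:R)%R.
Proof.
have Lpos : forall u v, e u v -> 0 < #|Lset e u v|.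
  move=> u v uv; apply/card_gt0P; exists u; rewrite inE dist_refl eq_sym.
  apply: dist_neq; apply/negP => /eqP E; by rewrite E e_irr in uv.
have lGle : forall u v, e u v -> lG e <= #|Lset e u v|.
  move=> u v uv; rewrite /lG; exact: (bigmin_le_n _ _ (j := (u, v))) (mem_index_enum _) uv.
have lGge : exists u v, e u v /\ #|Lset e u v| <= lG e.
  case: has_edge => u0 [v0 uv0].
  rewrite /lG; apply: (big_ind (fun m => exists u v, e u v /\ #|Lset e u v| <= m)).
  - exists u0, v0; split => //; exact: max_card.
  - move=> a b [u [v [h1 h2]]] [u' [v' [h1' h2']]].
    rewrite /minn; case: ltnP => ab; first by exists u, v.
    by exists u', v'.
  - by move=> [u v] /= uv; exists u, v.
have lG0 : 0 < lG e.
  case: has_edge => u0 [v0 uv0]; rewrite /lG.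
  apply: (big_ind (fun m => 0 < m)).
  - by apply/card_gt0P; exists u0.
  - by move=> a b a0 b0; rewrite leq_min a0 b0.
  - by move=> [u v] /= uv; exact: Lpos.
have lGR : (0 < (lG e)%:R :> R)%R by rewrite ltr0n.
split.
- exists (fun _ => (lG e)%:R^-1)%R; split; last first.
    by rewrite big_const iter_addr_0 [RHS]mulrC mulr_natr.
  split.
    move=> x; rewrite invr_ge0 ltW //= invr_le1 ?ler1n //; exact: unitf_gt0.
  move=> u v uv.
  by rewrite sumr_const -(mulr_natr _ #|Lset e u v|) mulrC ler_pdivlMr // mul1r ler_nat lGle.
- move=> f [f01 fL].
  set S := (\sum_x f x)%R.
  have S0 : (0 <= S)%R by apply: sumr_ge0 => x _; case/andP: (f01 x).
  case: lGge => u0 [v0 [uv0 Lle]].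
  pose P := isAut e.
  pose c := fun x => (\sum_(g | P g) f (g x))%R.
  have cconst : forall x y, c x = c y.
    move=> x y; case: (vt y x) => h [Hh hy].
    have Ph : P h by apply/isAutP.
    symmetry; rewrite /c (reindex_inj (mulgI h)) /=.
    apply: eq_big => g; first by rewrite /P isAutM.
    by rewrite permM hy.
  have sumc : (\sum_x c x = #|P|%:R * S)%R.
    rewrite /c exchange_big /=.
    rewrite (eq_bigr (fun _ => S)); last first.
      by move=> g _; rewrite /S [RHS](reindex_inj (@perm_inj _ g)).
    by rewrite sumr_const mulr_natl.
  have sumc2 : (\sum_x c x = #|T|%:R * c u0)%R.
    rewrite (eq_bigr (fun _ => c u0)); last by move=> x _; exact: cconst.
    by rewrite big_const iter_addr_0 mulr_natl.
  have key : (#|P|%:R <= \sum_(g | P g) \sum_(x in Lset e u0 v0) f (g x))%R.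
    rewrite -sumr_const; apply: ler_sum => g Pg.
    have Hg : forall x y, e (g x) (g y) = e x y by apply/isAutP.
    have := fL (g u0) (g v0); rewrite Hg => /(_ uv0).
    rewrite (reindex_inj (@perm_inj _ g)) /=.
    by rewrite (eq_bigl (fun x => x \in Lset e u0 v0)) // => x; rewrite Lset_aut.
  have key2 : (\sum_(g | P g) \sum_(x in Lset e u0 v0) f (g x) = #|Lset e u0 v0|%:R * c u0)%R.
    rewrite exchange_big /=.
    rewrite (eq_bigr (fun _ => c u0)); last by move=> x _; exact: cconst.
    by rewrite sumr_const mulr_natl.
  have N0 : (0 < #|P|%:R :> R)%R.
    rewrite ltr0n; apply/card_gt0P; exists 1%g; apply/isAutP => x y; by rewrite !perm1.
  rewrite ler_pdivrMr //.
  have h1 : (#|P|%:R * #|T|%:R <= #|P|%:R * (S * #|Lset e u0 v0|%:R) :> R)%R.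
    rewrite key2 in key.
    rewrite mulrA -sumc sumc2 mulrC.
    rewrite -mulrA ler_pM2l ?ltr0n ?card_gt0; last by apply/card_gt0P; exists u0.
    by rewrite mulrC.
  rewrite ler_pM2l // in h1.
  apply: (le_trans h1); apply: ler_wpM2l => //.
  by rewrite ler_nat.
Qed.
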